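(* Let $n,m,d\ge 1$. For each $i\in\{1,\dots,n\}$ let $\mathcal{B}_i\in\mathbb{R}^{l_i\times m}$, $Z_i\in\mathbb{R}^{k_i\times l_i}$ and $\mu_i\ge 0$ be such that $M_i=\mathcal{B}_i\mathcal{B}_i^{\top}+\mu_i Z_i^{\top}Z_i$ is invertible. Define $Q_i=\mathcal{B}_i^{\top}M_i^{-1}\mathcal{B}_i\in\mathbb{R}^{m\times m}$, $\mathcal{Q}_{II}=\sum_{i=1}^n Q_i$ and $\mathcal{P}_{II}=\sum_{i=1}^n(I_m-Q_i)=nI_m-\mathcal{Q}_{II}$, and let $\mathbf{1}\in\mathbb{R}^m$ be the all-ones vector. Then the following statements are equivalent: (a) $\mathcal{P}_{II}\mathbf{1}=0$; (b) $\mathcal{Q}_{II}\mathbf{1}=n\mathbf{1}$; (c) $Q_i\mathbf{1}=\mathbf{1}$ for every $i\in\{1,\dots,n\}$; (d) the function $S\mapsto\mathrm{tr}(S\mathcal{P}_{II}S^{\top})$ on $\mathbb{R}^{d\times m}$ is invariant to translations, i.e. $\mathrm{tr}\big((S+t\mathbf{1}^{\top})\mathcal{P}_{II}(S+t\mathbf{1}^{\top})^{\top}\big)=\mathrm{tr}(S\mathcal{P}_{II}S^{\top})$ for all $S\in\mathbb{R}^{d\times m}$ and all $t\in\mathbb{R}^d$; (e) for every $i\in\{1,\dots,n\}$ there exists $x_i\in\mathbb{R}^{l_i}$ with $\mathcal{B}_i^{\top}x_i=\mathbf{1}$ and, if $\mu_i>0$, additionally $Z_ix_i=0$.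
   Context: In the paper, $\mathcal{B}_i=\mathcal{B}_i(D_i)$ is the matrix obtained by applying a feature map $\beta_i:\mathbb{R}^d\to\mathbb{R}^{l_i}$ to each column (point) of a datum shape $D_i\in\mathbb{R}^{d\times m}$, $Z_i$ is a regularization matrix and $\mu_i$ a smoothing weight of a linear basis warp $p\mapsto W^{\top}\beta_i(p)$; for the statement only the matrices themselves matter. *)

(* Defs.v *)
From mathcomp Require Import all_boot all_order all_algebra.
Set Implicit Arguments. Unset Strict Implicit. Unset Printing Implicit Defensive.
Import Order.TTheory GRing.Theory Num.Theory.
Local Open Scope ring_scope.

Definition ones (R : realFieldType) (m : nat) : 'cV[R]_m := const_mx 1.

Definition Mmat (R : realFieldType) (m l k : nat)
  (B : 'M[R]_(l, m)) (Z : 'M[R]_(k, l)) (mu : R) : 'M[R]_l :=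
  B *m B^T + mu *: (Z^T *m Z).

Definition Qmat (R : realFieldType) (m l k : nat)
  (B : 'M[R]_(l, m)) (Z : 'M[R]_(k, l)) (mu : R) : 'M[R]_m :=
  B^T *m invmx (Mmat B Z mu) *m B.

Definition QII (R : realFieldType) (n m : nat) (l k : 'I_n -> nat)
  (B : forall i, 'M[R]_(l i, m)) (Z : forall i, 'M[R]_(k i, l i))
  (mu : 'I_n -> R) : 'M[R]_m :=
  \sum_(i < n) Qmat (B i) (Z i) (mu i).

Definition PII (R : realFieldType) (n m : nat) (l k : 'I_n -> nat)
  (B : forall i, 'M[R]_(l i, m)) (Z : forall i, 'M[R]_(k i, l i))
  (mu : 'I_n -> R) : 'M[R]_m :=
  \sum_(i < n) (1%:M - Qmat (B i) (Z i) (mu i)).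

(* Main.v *)
Require Import Defs.
From mathcomp Require Import all_boot all_order all_algebra.
From mathcomp Require Import ring lra.
Set Implicit Arguments. Unset Strict Implicit. Unset Printing Implicit Defensive.
Import Order.TTheory GRing.Theory Num.Theory.
Local Open Scope ring_scope.

Definition sq (R : realFieldType) p (w : 'cV[R]_p) : R := (w^T *m w) 0 0.

Lemma sq_ge0 (R : realFieldType) p (w : 'cV[R]_p) : 0 <= sq w.
Proof.
rewrite /sq mxE; apply: sumr_ge0 => j _; rewrite mxE; by rewrite -expr2 sqr_ge0.
Qed.

Lemma sq_eq0 (R : realFieldType) p (w : 'cV[R]_p) : sq w = 0 -> w = 0.
Proof.
rewrite /sq mxE => /eqP; rewrite psumr_eq0; last first.
  by move=> j _; rewrite mxE; by rewrite -expr2 sqr_ge0.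
move/allP => H; apply/matrixP => i j; rewrite (ord1 j) !mxE.
have := H i (mem_index_enum _); rewrite mxE /= mulf_eq0 orbb => /eqP //.
Qed.

Lemma trK (R : realFieldType) p q (A : 'M[R]_(p,q)) : A^T^T = A.
Proof. exact: trmxK. Qed.

Lemma trB (R : realFieldType) p q (A C : 'M[R]_(p,q)) : (A - C)^T = A^T - C^T.
Proof. by apply/matrixP=> i j; rewrite !mxE. Qed.

Lemma trDs (R : realFieldType) p q (A C : 'M[R]_(p,q)) (a : R) : (A + a *: C)^T = A^T + a *: C^T.
Proof. by apply/matrixP=> i j; rewrite !mxE. Qed.

Lemma Msym (R : realFieldType) (m l k : nat) (B : 'M[R]_(l, m)) (Z : 'M[R]_(k, l)) mu :
  (Mmat B Z mu)^T = Mmat B Z mu.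
Proof. by rewrite /Mmat trDs !trmx_mul !trK. Qed.

Lemma Qsym (R : realFieldType) (m l k : nat) (B : 'M[R]_(l, m)) (Z : 'M[R]_(k, l)) mu :
  (Qmat B Z mu)^T = Qmat B Z mu.
Proof. by rewrite /Qmat !trmx_mul trmx_inv Msym trmxK mulmxA. Qed.

Lemma tr11 (R : realFieldType) (A : 'M[R]_1) : A^T = A.
Proof. by apply/matrixP => i j; rewrite (ord1 i) (ord1 j) mxE. Qed.

Lemma sqB (R : realFieldType) p (v w : 'cV[R]_p) :
  sq (v - w) = sq v - (v^T *m w) 0 0 - (w^T *m v) 0 0 + sq w.
Proof. rewrite /sq trB mulmxBl !mulmxBr !mxE. ring. Qed.

Lemma dotC (R : realFieldType) p (a b : 'cV[R]_p) : (a^T *m b) 0 0 = (b^T *m a) 0 0.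
Proof. by rewrite !mxE; apply: eq_bigr => j _; rewrite !mxE mulrC. Qed.

Lemma key0 (R : realFieldType) p q r (B : 'M[R]_(p,q)) (Z : 'M[R]_(r,p)) mu
  (v : 'cV[R]_q) (y : 'cV[R]_p) :
  (B *m B^T + mu *: (Z^T *m Z)) *m y = B *m v ->
  (v^T *m v) 0 0 - ((B *m v)^T *m y) 0 0 = sq (v - B^T *m y) + mu * sq (Z *m y).
Proof.
move=> My.
have yMy : (y^T *m ((B *m B^T + mu *: (Z^T *m Z)) *m y)) 0 0
   = sq (B^T *m y) + mu * sq (Z *m y).
  rewrite /sq mulmxDl mulmxDr -scalemxAl -scalemxAr !trmx_mul trK !mulmxA.
  by rewrite !mxE.
have e1 : (v^T *m (B^T *m y)) 0 0 = ((B *m v)^T *m y) 0 0 by rewrite trmx_mul mulmxA.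
have e2 : ((B^T *m y)^T *m v) 0 0 = ((B *m v)^T *m y) 0 0.
  by rewrite trmx_mul trK -mulmxA dotC.
rewrite My dotC in yMy.
rewrite sqB e1 e2 yMy; rewrite -/(sq v); ring.
Qed.

Section PerI.
Variables (R : realFieldType) (m l k : nat) (B : 'M[R]_(l, m)) (Z : 'M[R]_(k, l)) (mu : R).
Hypothesis hmu : 0 <= mu.
Hypothesis hM : Mmat B Z mu \in unitmx.

Definition fv := ((ones R m)^T *m ones R m) 0 0 - ((ones R m)^T *m Qmat B Z mu *m ones R m) 0 0.

Lemma f_eq : let y := invmx (Mmat B Z mu) *m (B *m ones R m) in
  fv = sq (ones R m - B^T *m y) + mu * sq (Z *m y).
Proof.
move=> y; rewrite /fv -(@key0 _ _ _ _ B Z mu (ones R m) y).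
  rewrite /Qmat /y trmx_mul !mulmxA; reflexivity.
by change (Mmat B Z mu *m y = B *m ones R m); rewrite /y mulKVmx.
Qed.

Lemma f_ge0 : 0 <= fv.
Proof. by rewrite f_eq addr_ge0 ?mulr_ge0 ?sq_ge0. Qed.

Lemma f0_e : fv = 0 -> exists x : 'cV[R]_l, B^T *m x = ones R m /\ (0 < mu -> Z *m x = 0).
Proof.
rewrite f_eq => /eqP; rewrite paddr_eq0 ?mulr_ge0 ?sq_ge0 // => /andP [/eqP h1 /eqP h2].
exists (invmx (Mmat B Z mu) *m (B *m ones R m)); split.
  by apply/eqP; rewrite eq_sym -subr_eq0; apply/eqP/sq_eq0.
move=> mu0; apply: sq_eq0; move/eqP: h2; rewrite mulf_eq0 => /orP [/eqP h|/eqP //].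
by move: mu0; rewrite h ltxx.
Qed.

Lemma e_c : (exists x : 'cV[R]_l, B^T *m x = ones R m /\ (0 < mu -> Z *m x = 0)) ->
  Qmat B Z mu *m ones R m = ones R m.
Proof.
case=> x [h1 h2].
have Mx : Mmat B Z mu *m x = B *m ones R m.
  rewrite /Mmat mulmxDl -mulmxA h1 -scalemxAl -mulmxA.
  move: hmu; rewrite le0r => /orP [/eqP ->|/h2 ->]; first by rewrite scale0r addr0.
  by rewrite mulmx0 scaler0 addr0.
by rewrite /Qmat -!mulmxA -Mx mulKmx // h1.
Qed.

Lemma c_f0 : Qmat B Z mu *m ones R m = ones R m -> fv = 0.
Proof. by move=> h; rewrite /fv -mulmxA h subrr. Qed.

End PerI.

Lemma trD (R : realFieldType) p q (A C : 'M[R]_(p,q)) : (A + C)^T = A^T + C^T.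
Proof. by apply/matrixP=> i j; rewrite !mxE. Qed.

Lemma P1sum (R : realFieldType) (n m : nat) (l k : 'I_n -> nat)
  (B : forall i, 'M[R]_(l i, m)) (Z : forall i, 'M[R]_(k i, l i)) (mu : 'I_n -> R) :
  PII B Z mu *m ones R m = \sum_i (ones R m - Qmat (B i) (Z i) (mu i) *m ones R m).
Proof. by rewrite /PII mulmx_suml; apply: eq_bigr => i _; rewrite mulmxBl mul1mx. Qed.

Lemma P1QII (R : realFieldType) (n m : nat) (l k : 'I_n -> nat)
  (B : forall i, 'M[R]_(l i, m)) (Z : forall i, 'M[R]_(k i, l i)) (mu : 'I_n -> R) :
  PII B Z mu *m ones R m = ones R m *+ n - QII B Z mu *m ones R m.
Proof.
by rewrite P1sum sumrB sumr_const card_ord /QII mulmx_suml.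
Qed.

Lemma sumf (R : realFieldType) (n m : nat) (l k : 'I_n -> nat)
  (B : forall i, 'M[R]_(l i, m)) (Z : forall i, 'M[R]_(k i, l i)) (mu : 'I_n -> R) :
  \sum_i fv (B i) (Z i) (mu i) = ((ones R m)^T *m (PII B Z mu *m ones R m)) 0 0.
Proof.
rewrite P1sum mulmx_sumr summxE; apply: eq_bigr => i _.
by rewrite /fv mulmxBr [in RHS]mxE [X in _ = _ + X]mxE /Qmat !mulmxA.
Qed.

Lemma Psym (R : realFieldType) (n m : nat) (l k : 'I_n -> nat)
  (B : forall i, 'M[R]_(l i, m)) (Z : forall i, 'M[R]_(k i, l i)) (mu : 'I_n -> R) :
  (PII B Z mu)^T = PII B Z mu.
Proof.
apply/matrixP=> i j; rewrite mxE !summxE; apply: eq_bigr => r _.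
have := Qsym (B r) (Z r) (mu r); move/matrixP/(_ j i); rewrite mxE => h.
by rewrite /Qmat !mxE in h; rewrite !mxE -h eq_sym.
Qed.

Lemma tr1 (R : realFieldType) (A : 'M[R]_1) : \tr A = A 0 0.
Proof. exact: big_ord1. Qed.

Lemma ttd (R : realFieldType) d i j : ((const_mx 1 : 'cV[R]_d)^T *m (const_mx 1 : 'cV[R]_d)) i j = d%:R.
Proof.
rewrite mxE (eq_bigr (fun _ => 1)) ?sumr_const ?card_ord //.
by move=> r _; rewrite !mxE mulr1.
Qed.

Theorem theorem2 (R : realFieldType) (n m d : nat)
  (hn : (0 < n)%N) (hm : (0 < m)%N) (hd : (0 < d)%N)
  (l k : 'I_n -> nat)
  (B : forall i, 'M[R]_(l i, m)) (Z : forall i, 'M[R]_(k i, l i))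
  (mu : 'I_n -> R)
  (hmu : forall i, 0 <= mu i)
  (hM : forall i, Mmat (B i) (Z i) (mu i) \in unitmx) :
  [<->
    (* (a) *) PII B Z mu *m ones R m = 0;
    (* (b) *) QII B Z mu *m ones R m = n%:R *: ones R m;
    (* (c) *) (forall i, Qmat (B i) (Z i) (mu i) *m ones R m = ones R m);
    (* (d) *) (forall (S : 'M[R]_(d, m)) (t : 'cV[R]_d),
                 \tr ((S + t *m (ones R m)^T) *m PII B Z mu *m (S + t *m (ones R m)^T)^T)
                 = \tr (S *m PII B Z mu *m S^T));
    (* (e) *) (forall i, exists x : 'cV[R]_(l i),
                 (B i)^T *m x = ones R m /\ (0 < mu i -> Z i *m x = 0))
  ].
Proof.
have sum0 : ((ones R m)^T *m (PII B Z mu *m ones R m)) 0 0 = 0 ->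
    forall i, exists x : 'cV[R]_(l i),
                 (B i)^T *m x = ones R m /\ (0 < mu i -> Z i *m x = 0).
  rewrite -sumf => /eqP; rewrite psumr_eq0; last by move=> i _; apply: f_ge0.
  move/allP => h i; apply: f0_e; have := h i (mem_index_enum _); by move/implyP/(_ isT)/eqP.
tfae.
- by move=> h; apply/eqP; rewrite scaler_nat eq_sym -subr_eq0 -P1QII h.
- move=> h i; apply: e_c => //; move: i; apply: sum0.
  by rewrite P1QII h scaler_nat subrr mulmx0 mxE.
- move=> hc S t.
  have P1 : PII B Z mu *m ones R m = 0.
    by rewrite P1sum; apply: big1 => i _; rewrite hc subrr.
  have P1' : (ones R m)^T *m PII B Z mu = 0.
    by rewrite -[PII B Z mu]Psym -trmx_mul P1 trmx0.
  rewrite trD trmx_mul trK mulmxDr mulmxDl.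
  rewrite [X in _ + X](_ : _ = 0).
    by rewrite addr0 mulmxDl -(mulmxA t) P1' mulmx0 mul0mx addr0.
  by rewrite mulmxA mulmxDl -(mulmxA S) -(mulmxA (t *m _)) P1 !mulmx0 addr0 mul0mx.
- move=> hd'; apply: sum0.
  have := hd' 0 (const_mx 1).
  rewrite !add0r !mul0mx mxtrace0 trmx_mul trK -!mulmxA mxtrace_mulC !mulmxA.
  rewrite tr1 -(mulmxA ((ones R m)^T *m PII B Z mu *m ones R m)) [X in X = 0]mxE big_ord1.
  rewrite ttd => /eqP; rewrite mulf_eq0 pnatr_eq0 (gtn_eqF hd) orbF => /eqP.
  done.
- move=> he; rewrite P1sum; apply: big1 => i _.
  by rewrite e_c ?subrr.
Qed.
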